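(* For every word $w\in\mathcal{M}_n^e$: \[ Q_+w=\sum_{T\subseteq E^y_w}(-1)^{|T|}\psi^y_Tw,\qquad Q_+^{-1}w=\sum_{w'\le w}w', \] \[ Q_-w=\sum_{T\subseteq E^x_w}(-1)^{|T|}\psi^x_Tw,\qquad Q_-^{-1}w=\sum_{w'\ge w}w', \] where the sums over $w'$ range over words in $\mathcal{M}_n^e$. In particular $Q_\pm$ and their inverses have integer coefficients.
   Context: $\mathcal{M}_n^e$ is the set of words in letters $x,y$ with $n_x$ $x$'s and $n_y$ $y$'s, $n=n_x+n_y$, $e=n_y-n_x$; $\mathcal{F}_n^e$ is its free $\mathbb{Z}$-span. Partial order: $w_0\le w_1$ iff for each $i$ the $i$-th $x$ of $w_0$ is at a position $\le$ that of the $i$-th $x$ of $w_1$. Bilinear form $\langle w_0|w_1\rangle=1$ if $w_0\le w_1$, else $0$; dot form $w_0\cdot w_1=1$ if $w_0=w_1$, else $0$. $Q_+,Q_-$ are the linear maps on $\mathcal{F}_n^e\otimes\mathbb{Q}$ with $u\cdot v=\langle u|Q_+v\rangle=\langle Q_-u|v\rangle$ for all $u,v$. $E^x_w$ is the set of occurrences of $x$ in $w$ immediately followed by a $y$; for $T\subseteq E^x_w$, $\psi^x_Tw$ replaces, for each $x\in T$, that $x$ and its following $y$ ($xy$) by $yx$. Similarly $E^y_w$ is the set of $y$'s immediately followed by an $x$, and $\psi^y_Tw$ replaces each such $yx$ ($y\in T$) by $xy$. *)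

(* Defs.v *)
From HB Require Import structures.
From mathcomp Require Import all_boot all_order all_algebra.
Set Implicit Arguments. Unset Strict Implicit. Unset Printing Implicit Defensive.
Import Order.TTheory GRing.Theory Num.Theory.
Local Open Scope ring_scope.

Definition lx : bool := false.
Definition ly : bool := true.

Definition word (n : nat) := n.-tuple bool.

Definition inM (e : int) {n : nat} (w : word n) : bool :=
  ((count (pred1 ly) w)%:Z - (count (pred1 lx) w)%:Z == e).

Definition Mne (n : nat) (e : int) : finType := {w : word n | inM e w}.

Definition xpos {n : nat} (w : word n) : seq nat :=
  [seq i <- iota 0 n | nth ly w i == lx].

(* Partial order: the i-th x of w0 is at a position <= that of the i-th x of w1
   (for every i; words of M_n^e have the same number of x's). *)
Definition leW {n : nat} (w0 w1 : word n) : bool :=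
  all2 (fun p q => (p <= q)%N) (xpos w0) (xpos w1).

(* F_n^e (x) Q : rational vectors indexed by M_n^e. *)
Definition vec (n : nat) (e : int) := {ffun Mne n e -> rat}.

(* The vector of F_n^e (x) Q given by a word t (t is meant to lie in M_n^e). *)
Definition bvec {n : nat} {e : int} (t : word n) : vec n e :=
  [ffun w' : Mne n e => ((val w' == t) : nat)%:R].

Definition dotf {n : nat} {e : int} (u v : vec n e) : rat :=
  \sum_(w : Mne n e) u w * v w.

Definition bilf {n : nat} {e : int} (u v : vec n e) : rat :=
  \sum_(w0 : Mne n e) \sum_(w1 : Mne n e)
     u w0 * v w1 * ((leW (val w0) (val w1) : nat)%:R).

Definition scv {n : nat} {e : int} (a : rat) (u : vec n e) : vec n e :=
  [ffun w => a * u w].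

Definition is_linear {n : nat} {e : int} (Q : vec n e -> vec n e) : Prop :=
  forall (a : rat) (u v : vec n e), Q (scv a u + v) = scv a (Q u) + Q v.

Definition Ex {n : nat} (w : word n) : {set 'I_n} :=
  [set i : 'I_n | (nth ly w i == lx) && (i.+1 < n)%N && (nth lx w i.+1 == ly)].

Definition Ey {n : nat} (w : word n) : {set 'I_n} :=
  [set i : 'I_n | (nth lx w i == ly) && (i.+1 < n)%N && (nth ly w i.+1 == lx)].

(* Replace, for each i in T, the two letters at positions i, i+1 by [b; ~~ b]
   (pairs at positions in T are disjoint when T is a subset of E^x_w or E^y_w). *)
Definition swapT {n : nat} (b : bool) (T : {set 'I_n}) (w : word n) : word n :=
  [tuple (if [exists i in T, (j : nat) == i] then b
          else if [exists i in T, (j : nat) == (i : nat).+1] then ~~ b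
          else tnth w j) | j < n].

Definition psix {n : nat} (T : {set 'I_n}) (w : word n) : word n := swapT ly T w.
Definition psiy {n : nat} (T : {set 'I_n}) (w : word n) : word n := swapT lx T w.

(* Main.v *)
Require Import Defs.
From HB Require Import structures.
From mathcomp Require Import all_boot all_order all_algebra zify ring.
Set Implicit Arguments. Unset Strict Implicit. Unset Printing Implicit Defensive.
Import Order.TTheory GRing.Theory Num.Theory.

Lemma all2_count (p q : seq nat) :
  sorted ltn p -> sorted ltn q -> size p = size q ->
  all2 leq p q <-> (forall j, count (fun x => x < j) q <= count (fun x => x < j) p)%N.
Proof.
elim: p q => [|a p IH] [|b q] //=.
move=> sp sq [eqs].
have sp' := path_sorted sp; have sq' := path_sorted sq.
have ap := order_path_min ltn_trans sp; have aq := order_path_min ltn_trans sq.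
split.
  case/andP=> ab /(IH _ sp' sq' eqs) H j.
  have := H j; case: (ltnP b j) => bj; case: (ltnP a j) => aj //=; try lia.
move=> H; have ab : a <= b.
  rewrite leqNgt; apply/negP=> ba; have := H b.+1.
  rewrite /= ltnSn ltnS (leqNgt a b) ba /=.
  have -> : count (fun x => x < b.+1) p = 0.
    apply/eqP; rewrite -leqn0 leqNgt -has_count; apply/hasPn => x xp.
    move/allP: ap => /(_ x xp) ax; rewrite -leqNgt; exact: leq_trans ba (ltnW ax).
  lia.
rewrite ab /=; apply/(IH _ sp' sq' eqs) => j.
case: (ltnP b j) => bj.
  have := H j; rewrite /= bj (leq_ltn_trans ab bj) /=; lia.
have -> : count (fun x => x < j) q = 0.
  apply/eqP; rewrite -leqn0 leqNgt -has_count; apply/hasPn => x xq.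
  move/allP: aq => /(_ x xq) ax; rewrite -leqNgt; exact: leq_trans bj (ltnW ax).
by [].
Qed.

Definition fx (w : seq bool) (i : nat) : bool := nth ly w i == lx.
Definition cw (w : seq bool) (j : nat) : nat := count (fx w) (iota 0 j).

Lemma cwS w j : cw w j.+1 = cw w j + fx w j.
Proof. by rewrite /cw -addn1 iotaD count_cat /= add0n addn0. Qed.

Lemma cw0 w : cw w 0 = 0.
Proof. by []. Qed.

Lemma fx_big (w : seq bool) i : size w <= i -> fx w i = false.
Proof. by move=> h; rewrite /fx nth_default. Qed.

Lemma cw_big (w : seq bool) j : size w <= j -> cw w j = cw w (size w).
Proof.
move=> h; rewrite /cw -(subnKC h) iotaD count_cat add0n.
rewrite [X in _ + X](@eq_in_count _ _ pred0); first by rewrite count_pred0 addn0.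
by move=> i; rewrite mem_iota => /andP [hi _]; rewrite /= fx_big.
Qed.

Lemma xpos_count (n : nat) (w : word n) j :
  count (fun x => x < j) (xpos w) = cw w j.
Proof.
rewrite /xpos count_filter.
have hs : size w = n by rewrite size_tuple.
transitivity (count (predI (fun x => x < j) (fx w)) (iota 0 (j + n))).
  rewrite addnC iotaD count_cat add0n.
  rewrite [X in _ + X](@eq_in_count _ _ pred0); first by rewrite count_pred0 addn0.
  by move=> i; rewrite mem_iota => /andP [hi _]; rewrite /= fx_big ?andbF // hs.
rewrite iotaD count_cat add0n.
rewrite [X in _ + X](@eq_in_count _ _ pred0); last first.
  by move=> i; rewrite mem_iota => /andP [hi _]; rewrite /= ltnNge hi.
rewrite count_pred0 addn0; apply: eq_in_count => i; rewrite mem_iota add0n => /andP [_ hi].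
by rewrite /= hi.
Qed.

Lemma xpos_sorted (n : nat) (w : word n) : sorted ltn (xpos w).
Proof. apply: sorted_filter; [exact: ltn_trans | exact: iota_ltn_sorted]. Qed.

Lemma cntx_cw (n : nat) (w : word n) : count (pred1 lx) w = cw w n.
Proof.
rewrite -{1}(mkseq_nth ly w) size_tuple /mkseq count_map; exact: eq_count.
Qed.

Lemma size_xpos (n : nat) (w : word n) : size (xpos w) = cw w n.
Proof. by rewrite /xpos size_filter. Qed.

Lemma cnty_cw (n : nat) (w : word n) : count (pred1 ly) w = n - cw w n.
Proof.
have h := count_predC (pred1 lx) w; rewrite size_tuple cntx_cw in h.
have e1 : count (pred1 ly) w = count (predC (pred1 lx)) w by apply: eq_count => b; case: b.
lia.
Qed.

Lemma M_cnt (n : nat) (e : int) (a b : Mne n e) : cw (val a) n = cw (val b) n.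
Proof.
case: a b => [a ha] [b hb] /=; move: ha hb; rewrite /inM !cnty_cw.
have := cntx_cw a; have := cntx_cw b.
have := count_size (pred1 lx) a; have := count_size (pred1 lx) b.
rewrite !size_tuple => h1 h2 h3 h4.
move=> /eqP ha /eqP hb; move: ha hb.
rewrite -!h3 -!h4 => ha hb. lia.
Qed.

Lemma leW_cw (n : nat) (a b : word n) : cw a n = cw b n ->
  leW a b <-> forall j, cw b j <= cw a j.
Proof.
move=> h; rewrite /leW; rewrite all2_count ?xpos_sorted ?size_xpos //.
by split=> H j; have := H j; rewrite !xpos_count.
Qed.
Definition dl0 (n : nat) (T : {set 'I_n}) (j : nat) := [exists i in T, j == (i : nat)].
Definition dl (n : nat) (T : {set 'I_n}) (j : nat) := [exists i in T, j == (i : nat).+1].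

Lemma dlS n (T : {set 'I_n}) j : dl T j.+1 = dl0 T j.
Proof. by []. Qed.

Lemma dl_0 n (T : {set 'I_n}) : dl T 0 = false.
Proof. by rewrite /dl; case: existsP => // -[i /andP []]. Qed.

Lemma fx_swap n b0 (T : {set 'I_n}) (w : word n) j : j < n ->
  fx (swapT b0 T w) j = if dl0 T j then b0 == lx else if dl T j then ~~ b0 == lx else fx w j.
Proof.
move=> hj; rewrite /fx.
have -> : nth ly (swapT b0 T w) j = tnth (swapT b0 T w) (Ordinal hj) by rewrite (tnth_nth ly).
rewrite tnth_mktuple /dl0 /dl /= (tnth_nth ly) /=.
by case: ifP => //; case: ifP.
Qed.

Section Swap.
Variables (n : nat) (b0 : bool) (T : {set 'I_n}) (w : word n).
Hypothesis hT : forall t, t \in T -> [/\ (t : nat).+1 < n, fx w t = (b0 != lx) & fx w (t : nat).+1 = (b0 == lx)].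

Lemma dl0_lt j : dl0 T j -> j < n.
Proof. by case/existsP=> i /andP [_ /eqP ->]. Qed.
Lemma dl_lt j : dl T j -> j < n.
Proof. by case/existsP=> i /andP [/hT [h _ _] /eqP ->]. Qed.
Lemma dl0_fx j : dl0 T j -> fx w j = (b0 != lx).
Proof. by case/existsP=> i /andP [/hT [_ h _] /eqP ->]. Qed.
Lemma dl_fx j : dl T j -> fx w j = (b0 == lx).
Proof. by case/existsP=> i /andP [/hT [_ _ h] /eqP ->]. Qed.
Lemma dl_dl0 j : dl0 T j -> dl T j -> False.
Proof. by move=> /dl0_fx h1 /dl_fx; rewrite h1; case: (b0 == lx). Qed.

Lemma cw_swap_lx : b0 = lx -> forall j, cw (swapT b0 T w) j = cw w j + dl T j.
Proof.
move=> hb; elim=> [|j IH]; first by rewrite dl_0.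
rewrite !cwS IH dlS.
have [hj|hj] := ltnP j n.
  rewrite fx_swap // hb /=.
  case h0: (dl0 T j).
    have h1 : dl T j = false by apply/negbTE/negP => hh; exact: dl_dl0 h0 hh.
    by rewrite h1 (dl0_fx h0) hb /=; lia.
  case h1: (dl T j); first by rewrite (dl_fx h1) hb /=; lia.
  lia.
have h0 : dl0 T j = false by apply/negbTE/negP => hh; move: (dl0_lt hh); lia.
have h1 : dl T j = false by apply/negbTE/negP => hh; move: (dl_lt hh); lia.
by rewrite h0 h1 !fx_big ?size_tuple.
Qed.

Lemma cw_swap_ly : b0 = ly -> forall j, cw (swapT b0 T w) j + dl T j = cw w j.
Proof.
move=> hb; elim=> [|j IH]; first by rewrite dl_0.
rewrite !cwS dlS.
have [hj|hj] := ltnP j n.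
  rewrite fx_swap // hb /=.
  case h0: (dl0 T j).
    have h1 : dl T j = false by apply/negbTE/negP => hh; exact: dl_dl0 h0 hh.
    by move: IH; rewrite hb h1 (dl0_fx h0) hb /=; lia.
  case h1: (dl T j) => //.
    by move: IH; rewrite hb h1 (dl_fx h1) hb /=; lia.
  by move: IH; rewrite hb h1 /=; lia.
have h0 : dl0 T j = false by apply/negbTE/negP => /dl0_lt; lia.
have h1 : dl T j = false by apply/negbTE/negP => /dl_lt; lia.
by move: IH; rewrite hb h0 h1 !fx_big ?size_tuple //; lia.
Qed.
End Swap.
Section Phase.
Variables (n : nat) (a b : seq bool).
Hypothesis hn : cw a n = cw b n.

Lemma phaseA : (forall j, cw b j <= cw a j) -> forall j, j <= n -> cw b j < cw a j ->
  exists t, [/\ t.+1 < n, fx b t = false, fx b t.+1 & cw b t.+1 < cw a t.+1].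
Proof.
move=> hle.
have down : forall k, cw b k < cw a k -> fx b k -> k < n ->
    exists t, [/\ t.+1 < n, fx b t = false, fx b t.+1 & cw b t.+1 < cw a t.+1].
  elim=> [|k IH]; first by [].
  move=> hlt hf hk.
  case hfk: (fx b k); last by exists k; split.
  apply: IH; [|by []|lia].
  move: hlt; rewrite !cwS hfk; case: (fx a k) => /=; lia.
have up : forall m k, k + m = n -> cw b k < cw a k ->
    exists t, [/\ t.+1 < n, fx b t = false, fx b t.+1 & cw b t.+1 < cw a t.+1].
  elim=> [|m IH] k hkm hlt.
    by move: hlt; rewrite addn0 in hkm; rewrite hkm hn ltnn.
  case hfk: (fx b k); first by apply: down; [exact: hlt | exact: hfk | lia].
  apply: (IH k.+1); first by lia.
  have := hle k.+1; rewrite !cwS hfk; move: hlt; case: (fx a k) => /=; lia.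
move=> j hj hlt; apply: (up (n - j) j) => //; lia.
Qed.

Lemma phaseB : (forall j, cw a j <= cw b j) -> forall j, j <= n -> cw a j < cw b j ->
  exists t, [/\ t.+1 < n, fx b t, fx b t.+1 = false & cw a t.+1 < cw b t.+1].
Proof.
move=> hle.
have down : forall k, cw a k < cw b k ->
    exists t, t < k /\ cw a t.+1 < cw b t.+1 /\ fx b t.
  elim=> [|k IH]; first by [].
  move=> hlt.
  case hfk: (fx b k); first by exists k.
  have [t [h1 [h2 h3]]] : exists t, t < k /\ cw a t.+1 < cw b t.+1 /\ fx b t.
    apply: IH; move: hlt; rewrite !cwS hfk; case: (fx a k) => /=; lia.
  by exists t; split => //; lia.
have up : forall m t, t.+1 + m = n -> cw a t.+1 < cw b t.+1 -> fx b t ->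
    exists t, [/\ t.+1 < n, fx b t, fx b t.+1 = false & cw a t.+1 < cw b t.+1].
  elim=> [|m IH] t htm hlt hf.
    by move: hlt; rewrite addn0 in htm; rewrite htm hn ltnn.
  case hfk: (fx b t.+1); last by exists t; split => //; lia.
  apply: (IH t.+1) => //; first by lia.
  have := hle t.+2; rewrite !cwS hfk; move: hlt; rewrite !cwS; case: (fx a t.+1) => /=; lia.
move=> j hj hlt; have [t [h1 [h2 h3]]] := down j hlt.
apply: (up (n - t.+1) t) => //; lia.
Qed.
End Phase.

Lemma sum_sign (n : nat) (S : {set 'I_n}) :
  (\sum_(T : {set 'I_n} | T \subset S) ((-1 : rat) ^+ #|T|) = ((S == set0) : nat)%:R)%R.
Proof.
Local Open Scope ring_scope.
case: (set_0Vmem S) => [->|[s sS]].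
  rewrite eqxx (eq_bigl (fun T => T == set0)); last by move=> T; rewrite subset0.
  by rewrite big_pred1_eq cards0 expr0.
have -> : (S == set0) = false by apply/negbTE/set0Pn; exists s.
set tg := fun T : {set 'I_n} => if s \in T then T :\ s else s |: T.
have tgK : involutive tg.
  move=> T; rewrite /tg; case hs: (s \in T).
    by rewrite setD11 setD1K.
  by rewrite setU11 setU1K ?hs.
set X := \sum_(T : {set 'I_n} | T \subset S) _.
have : X = - X.
  rewrite {1}/X (reindex_inj (inv_inj tgK)) /X -sumrN; apply: eq_big => T.
    rewrite /tg; case: ifP => hs.
      apply/idP/idP; last by move=> h; apply: subset_trans h; exact: subsetDl.
      move=> h; apply/subsetP => x; case: (x =P s) => [->//|/eqP xs] xT.
      by apply: (subsetP h); rewrite in_setD1 xs.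
    by rewrite subUset sub1set sS.
  move=> _; rewrite /tg; case: ifP => hs.
    by rewrite (cardsD1 s T) hs /= add1n exprS mulN1r opprK.
  by rewrite cardsU1 hs /= add1n exprS mulN1r.
move=> h; have h2 : X *+ 2 = 0 by rewrite mulr2n {1}h addNr.
by move/eqP: h2; rewrite mulrn_eq0 /= => /eqP.
Qed.
Local Close Scope ring_scope.

Lemma word_eq (n : nat) (a b : word n) : (forall j, j <= n -> cw a j = cw b j) -> a = b.
Proof.
move=> H; apply: val_inj; apply: (@eq_from_nth _ ly); first by rewrite !size_tuple.
move=> i; rewrite size_tuple => hi.
have h1 := H i.+1 hi; have h2 := H i (ltnW hi); rewrite !cwS h2 in h1.
have : fx a i = fx b i by move: h1; case: (fx a i); case: (fx b i) => /=; lia.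
by rewrite /fx; case: (nth ly a i); case: (nth ly b i).
Qed.

Lemma Ey_iff (n : nat) (b : word n) (t : 'I_n) :
  (t \in Ey b) = [&& (t : nat).+1 < n, ~~ fx b t & fx b (t : nat).+1].
Proof.
rewrite inE /fx (@set_nth_default _ b ly lx t) ?size_tuple ?ltn_ord //.
by case: (nth lx b t); case: (_ < n); case: (nth ly b _).
Qed.

Lemma Ex_iff (n : nat) (b : word n) (t : 'I_n) :
  (t \in Ex b) = [&& (t : nat).+1 < n, fx b t & ~~ fx b (t : nat).+1].
Proof.
rewrite inE /fx; case h: (_ < n); rewrite ?andbF //=.
rewrite (@set_nth_default _ b ly lx (t : nat).+1) ?size_tuple //.
by case: (nth ly b t); case: (nth ly b _).
Qed.

Lemma hTy (n : nat) (b : word n) (T : {set 'I_n}) : T \subset Ey b ->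
  forall t, t \in T -> [/\ (t : nat).+1 < n, fx b t = (lx != lx) & fx b (t : nat).+1 = (lx == lx)].
Proof.
move=> sub t /(subsetP sub); rewrite Ey_iff => /and3P [h1 h2 h3].
by split => //; apply/negbTE.
Qed.

Lemma hTx (n : nat) (b : word n) (T : {set 'I_n}) : T \subset Ex b ->
  forall t, t \in T -> [/\ (t : nat).+1 < n, fx b t = (ly != lx) & fx b (t : nat).+1 = (ly == lx)].
Proof.
move=> sub t /(subsetP sub); rewrite Ex_iff => /and3P [h1 h2 h3].
by split => //; apply/negbTE.
Qed.

Lemma cw_psiy_n (n : nat) (b : word n) (T : {set 'I_n}) : T \subset Ey b ->
  cw (psiy T b) n = cw b n.
Proof.
move=> sub; rewrite /psiy (cw_swap_lx (hTy sub)) //.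
case hd: (dl T n); last by rewrite addn0.
by have := dl_lt (hTy sub) hd; rewrite ltnn.
Qed.

Lemma cw_psix_n (n : nat) (b : word n) (T : {set 'I_n}) : T \subset Ex b ->
  cw (psix T b) n = cw b n.
Proof.
move=> sub; rewrite /psix -(cw_swap_ly (hTx sub)) //.
case hd: (dl T n); last by rewrite addn0.
by have := dl_lt (hTx sub) hd; rewrite ltnn.
Qed.

Lemma inM_cw (n : nat) (e : int) (w1 w2 : word n) : cw w1 n = cw w2 n -> inM e w1 = inM e w2.
Proof. by move=> h; rewrite /inM !cnty_cw !cntx_cw h. Qed.

Lemma leWA (n : nat) (e : int) (a b : Mne n e) :
  leW (val a) (val b) && ([set t : 'I_n | (t \in Ey (val b)) && (cw (val b) (t : nat).+1 < cw (val a) (t : nat).+1)] == set0)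
  = (a == b).
Proof.
have hab := M_cnt a b.
apply/idP/idP.
  case/andP => /(leW_cw hab) H1 /eqP S0.
  apply/eqP/val_inj/word_eq => j hj.
  apply/eqP; rewrite eqn_leq H1 andbT leqNgt; apply/negP => hlt.
  have [t [h1 h2 h3 h4]] := phaseA hab H1 hj hlt.
  have : Ordinal (ltnW h1) \in set0 by rewrite -S0 inE Ey_iff /= h1 h2 h3 h4.
  by rewrite inE.
move/eqP => ->; apply/andP; split.
  by apply/(leW_cw (erefl _)) => j.
by apply/eqP/setP => t; rewrite !inE ltnn andbF.
Qed.

Lemma leWB (n : nat) (e : int) (a b : Mne n e) :
  leW (val b) (val a) && ([set t : 'I_n | (t \in Ex (val b)) && (cw (val a) (t : nat).+1 < cw (val b) (t : nat).+1)] == set0)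
  = (a == b).
Proof.
have hab := M_cnt a b.
apply/idP/idP.
  case/andP => /(leW_cw (esym hab)) H1 /eqP S0.
  apply/eqP/val_inj/word_eq => j hj.
  apply/eqP; rewrite eqn_leq H1 /= leqNgt; apply/negP => hlt.
  have [t [h1 h2 h3 h4]] := phaseB hab H1 hj hlt.
  have : Ordinal (ltnW h1) \in set0 by rewrite -S0 inE Ex_iff /= h1 h2 h3 h4.
  by rewrite inE.
move/eqP => ->; apply/andP; split.
  by apply/(leW_cw (erefl _)) => j.
by apply/eqP/setP => t; rewrite !inE ltnn andbF.
Qed.

Lemma identA (n : nat) (e : int) (a b : Mne n e) :
  (\sum_(T : {set 'I_n} | T \subset Ey (val b))
      (-1 : rat) ^+ #|T| * ((leW (val a) (psiy T (val b)) : nat)%:R) = ((a == b) : nat)%:R)%R.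
Proof.
set S := [set t : 'I_n | (t \in Ey (val b)) && (cw (val b) (t : nat).+1 < cw (val a) (t : nat).+1)].
have hab := M_cnt a b.
have key : forall T : {set 'I_n}, T \subset Ey (val b) ->
    leW (val a) (psiy T (val b)) = leW (val a) (val b) && (T \subset S).
  move=> T sub; have hT := hTy sub.
  have hn' : cw (val a) n = cw (psiy T (val b)) n by rewrite cw_psiy_n.
  apply/idP/idP.
    move=> /(leW_cw hn') H; rewrite /psiy in H.
    apply/andP; split.
      by apply/(leW_cw hab) => j; have := H j; rewrite (cw_swap_lx hT) //; lia.
    apply/subsetP => t tT; rewrite inE (subsetP sub t tT) /=.
    have hd : dl T (t : nat).+1 by apply/existsP; exists t; rewrite tT eqxx.
    by have := H (t : nat).+1; rewrite (cw_swap_lx hT) // hd /= addn1.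
  case/andP => /(leW_cw hab) H1 /subsetP H2.
  apply/(leW_cw hn') => j; rewrite /psiy (cw_swap_lx hT) //.
  case hd: (dl T j); last by have := H1 j; lia.
  move/existsP: hd => [t /andP [tT /eqP ->]].
  by have := H2 t tT; rewrite inE => /andP [_ h]; rewrite /= addn1.
transitivity (\sum_(T : {set 'I_n} | T \subset S) (((leW (val a) (val b)) : nat)%:R * (-1 : rat) ^+ #|T|))%R.
  rewrite big_mkcond [RHS]big_mkcond; apply: eq_bigr => T _.
  case hS: (T \subset S).
    have hE : T \subset Ey (val b).
      by apply: subset_trans hS _; apply/subsetP => t; rewrite inE => /andP [].
    by rewrite hE key // hS andbT mulrC.
  case hE: (T \subset Ey (val b)) => //.
  by rewrite key // hS andbF /= mulr0.
by rewrite -big_distrr /= sum_sign -natrM mulnb leWA.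
Qed.

Lemma identB (n : nat) (e : int) (a b : Mne n e) :
  (\sum_(T : {set 'I_n} | T \subset Ex (val b))
      (-1 : rat) ^+ #|T| * ((leW (psix T (val b)) (val a)  : nat)%:R) = ((a == b) : nat)%:R)%R.
Proof.
set S := [set t : 'I_n | (t \in Ex (val b)) && (cw (val a) (t : nat).+1 < cw (val b) (t : nat).+1)].
have hab := M_cnt a b.
have key : forall T : {set 'I_n}, T \subset Ex (val b) ->
    leW (psix T (val b)) (val a) = leW (val b) (val a) && (T \subset S).
  move=> T sub; have hT := hTx sub.
  have hn' : cw (psix T (val b)) n = cw (val a) n by rewrite cw_psix_n.
  apply/idP/idP.
    move=> /(leW_cw hn') H; rewrite /psix in H.
    apply/andP; split.
      apply/(leW_cw (esym hab)) => j; have := H j; have := cw_swap_ly hT (erefl _) j; lia.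
    apply/subsetP => t tT; rewrite inE (subsetP sub t tT) /=.
    have hd : dl T (t : nat).+1 by apply/existsP; exists t; rewrite tT eqxx.
    have := H (t : nat).+1; have := cw_swap_ly hT (erefl _) (t : nat).+1; rewrite hd /=.
    move=> h1 h2; apply: (leq_ltn_trans h2); rewrite -h1 /= addn1 ltnSn //.
  case/andP => /(leW_cw (esym hab)) H1 /subsetP H2.
  apply/(leW_cw hn') => j; have := cw_swap_ly hT (erefl _) j; rewrite /psix.
  case hd: (dl T j); last by have := H1 j; rewrite /=; lia.
  move/existsP: hd => [t /andP [tT /eqP ->]].
  have := H2 t tT; rewrite inE => /andP [_ h] /= h1.
  by move: h; rewrite -h1 addn1 ltnS.
transitivity (\sum_(T : {set 'I_n} | T \subset S) (((leW (val b) (val a)) : nat)%:R * (-1 : rat) ^+ #|T|))%R.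
  rewrite big_mkcond [RHS]big_mkcond; apply: eq_bigr => T _.
  case hS: (T \subset S).
    have hE : T \subset Ex (val b).
      by apply: subset_trans hS _; apply/subsetP => t; rewrite inE => /andP [].
    by rewrite hE key // hS andbT mulrC.
  case hE: (T \subset Ex (val b)) => //.
  by rewrite key // hS andbF /= mulr0.
by rewrite -big_distrr /= sum_sign -natrM mulnb leWB.
Qed.

Section Alg.
Local Open Scope ring_scope.
Variables (n : nat) (e : int).
Local Notation M := (Mne n e).

Definition Lm (a b : M) : rat := (leW (val a) (val b) : nat)%:R.
Definition Pm (a b : M) : rat := \sum_(T : {set 'I_n} | T \subset Ey (val b))
   (-1) ^+ #|T| * ((val a == psiy T (val b)) : nat)%:R.
Definition Nm (a b : M) : rat := \sum_(T : {set 'I_n} | T \subset Ex (val b))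
   (-1) ^+ #|T| * ((val a == psix T (val b)) : nat)%:R.

Lemma ind_sum (t : word n) (G : word n -> rat) : inM e t ->
  \sum_(c : M) ((val c == t) : nat)%:R * G (val c) = G t.
Proof.
move=> ht; rewrite (bigD1 (exist _ t ht)) //= eqxx mul1r big1 ?addr0 // => c hc.
have -> : (val c == t) = false.
  apply/negbTE; apply: contra hc => /eqP h; apply/eqP/val_inj; exact: h.
by rewrite mul0r.
Qed.

Lemma LP (a b : M) : \sum_(c : M) Lm a c * Pm c b = ((a == b) : nat)%:R.
Proof.
rewrite -(identA a b) /Pm.
under eq_bigr do rewrite big_distrr.
rewrite exchange_big /=; apply: eq_bigr => T sub.
rewrite (eq_bigr (fun c : M => ((val c == psiy T (val b)) : nat)%:R *
   ((-1) ^+ #|T| * (leW (val a) (val c) : nat)%:R))); last first.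
  by move=> c _; rewrite /Lm mulrCA [RHS]mulrCA; congr (_ * _); exact: mulrC.
rewrite (@ind_sum (psiy T (val b)) (fun w => (-1) ^+ #|T| * (leW (val a) w : nat)%:R)) //.
by rewrite (inM_cw e (cw_psiy_n sub)); exact: (valP b).
Qed.

Lemma NL (a b : M) : \sum_(c : M) Nm c a * Lm c b = ((a == b) : nat)%:R.
Proof.
rewrite eq_sym -(identB b a) /Nm.
under eq_bigr do rewrite big_distrl.
rewrite exchange_big /=; apply: eq_bigr => T sub.
rewrite (eq_bigr (fun c : M => ((val c == psix T (val a)) : nat)%:R *
   ((-1) ^+ #|T| * (leW (val c) (val b) : nat)%:R))); last first.
  by move=> c _; rewrite /Lm -mulrA mulrCA; congr (_ * _); exact: mulrC.
rewrite (@ind_sum (psix T (val a)) (fun w => (-1) ^+ #|T| * (leW w (val b) : nat)%:R)) //.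
by rewrite (inM_cw e (cw_psix_n sub)); exact: (valP a).
Qed.

Lemma dot_bvec (c : M) (v : vec n e) : dotf (bvec (val c)) v = v c.
Proof.
rewrite /dotf (bigD1 c) //= ffunE eqxx mul1r big1 ?addr0 // => w hw.
by rewrite ffunE val_eqE (negbTE hw) mul0r.
Qed.

Lemma dot_bvec' (c : M) (v : vec n e) : dotf v (bvec (val c)) = v c.
Proof.
rewrite /dotf (bigD1 c) //= ffunE eqxx mulr1 big1 ?addr0 // => w hw.
by rewrite ffunE val_eqE (negbTE hw) mulr0.
Qed.

Lemma bil_bvec (c : M) (z : vec n e) : bilf (bvec (val c)) z = \sum_w1 z w1 * Lm c w1.
Proof.
rewrite /bilf (bigD1 c) //= [X in _ + X]big1 ?addr0.
  by apply: eq_bigr => w1 _; rewrite ffunE eqxx mul1r.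
move=> w0 hw; apply: big1 => w1 _; by rewrite ffunE val_eqE (negbTE hw) !mul0r.
Qed.

Lemma bil_bvec' (c : M) (z : vec n e) : bilf z (bvec (val c)) = \sum_w0 z w0 * Lm w0 c.
Proof.
rewrite /bilf; apply: eq_bigr => w0 _.
rewrite (bigD1 c) //= ffunE eqxx mulr1 big1 ?addr0 // => w1 hw.
by rewrite ffunE val_eqE (negbTE hw) mulr0 mul0r.
Qed.

Lemma uniqP (Q : vec n e -> vec n e) : (forall u v, dotf u v = bilf u (Q v)) ->
  forall v a, Q v a = \sum_c Nm c a * v c.
Proof.
move=> H v a.
have hv : forall c, v c = \sum_w1 Q v w1 * Lm c w1.
  by move=> c; rewrite -dot_bvec H bil_bvec.
under eq_bigr do rewrite hv big_distrr.
rewrite exchange_big /=.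
rewrite (eq_bigr (fun w1 => Q v w1 * ((a == w1) : nat)%:R)); last first.
  by move=> w1 _; rewrite -NL big_distrr; apply: eq_bigr => c _; rewrite mulrCA.
rewrite (bigD1 a) //= eqxx mulr1 big1 ?addr0 // => w1 hw.
by rewrite eq_sym (negbTE hw) mulr0.
Qed.

Lemma uniqM (Q : vec n e -> vec n e) : (forall u v, dotf u v = bilf (Q u) v) ->
  forall u b, Q u b = \sum_c u c * Pm c b.
Proof.
move=> H u b.
have hu : forall c, u c = \sum_w0 Q u w0 * Lm w0 c.
  by move=> c; rewrite -dot_bvec' H bil_bvec'.
under eq_bigr do rewrite hu big_distrl.
rewrite exchange_big /=.
rewrite (eq_bigr (fun w0 => Q u w0 * ((w0 == b) : nat)%:R)); last first.
  by move=> w0 _; rewrite -LP big_distrr; apply: eq_bigr => c _; exact: (esym (mulrA _ _ _)).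
apply: esym; rewrite (bigD1 b) //= eqxx mulr1 big1 ?addr0 // => w0 hw.
by rewrite (negbTE hw) mulr0.
Qed.

Definition Qp0 (v : vec n e) : vec n e := [ffun a => \sum_b Pm a b * v b].
Definition Qm0 (u : vec n e) : vec n e := [ffun b => \sum_a Nm b a * u a].
Definition Qpi (v : vec n e) : vec n e := [ffun a => \sum_b Lm a b * v b].
Definition Qmi (u : vec n e) : vec n e := [ffun b => \sum_a u a * Lm a b].


Lemma sum_bvecR (F : M -> rat) (w : M) : \sum_b F b * (bvec (val w) : vec n e) b = F w.
Proof.
rewrite (bigD1 w) //= ffunE eqxx mulr1 big1 ?addr0 // => b hb.
by rewrite ffunE val_eqE (negbTE hb) mulr0.
Qed.

Lemma sum_bvecL (F : M -> rat) (w : M) : \sum_b (bvec (val w) : vec n e) b * F b = F w.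
Proof. by rewrite -(sum_bvecR F w); apply: eq_bigr => b _; rewrite mulrC. Qed.

Lemma sum_sel (P : pred M) (a : M) :
  (\sum_(c | P c) (bvec (val c) : vec n e)) a = (P a : nat)%:R.
Proof.
rewrite sum_ffunE big_mkcond (bigD1 a) //= ffunE eqxx big1 ?addr0.
  by case: (P a).
move=> c hc; rewrite ffunE eq_sym val_eqE (negbTE hc); by case: (P c).
Qed.

Lemma Qp0_prop u v : dotf u v = bilf u (Qp0 v).
Proof.
rewrite /dotf /bilf; apply: eq_bigr => w0 _.
under [RHS]eq_bigr do rewrite ffunE big_distrr big_distrl /=.
rewrite [RHS]exchange_big /=.
transitivity (\sum_b u w0 * v b * ((w0 == b) : nat)%:R).
  rewrite (bigD1 w0) //= eqxx mulr1 big1 ?addr0 // => b hb.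
  by rewrite eq_sym (negbTE hb) mulr0.
apply: eq_bigr => b _; rewrite -LP big_distrr; apply: eq_bigr => w1 _; rewrite /Lm /=; ring.
Qed.

Lemma Qm0_prop u v : dotf u v = bilf (Qm0 u) v.
Proof.
rewrite /dotf /bilf.
under [RHS]eq_bigr do under eq_bigr do rewrite ffunE !big_distrl /=.
rewrite [RHS]exchange_big /=.
under [RHS]eq_bigr do rewrite exchange_big /=.
rewrite [RHS]exchange_big /=.
apply: eq_bigr => a _.
transitivity (\sum_w1 u a * v w1 * ((a == w1) : nat)%:R).
  rewrite (bigD1 a) //= eqxx mulr1 big1 ?addr0 // => b hb.
  by rewrite eq_sym (negbTE hb) mulr0.
apply: eq_bigr => w1 _; rewrite -NL big_distrr; apply: eq_bigr => w0 _; rewrite /Lm /=; ring.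
Qed.

Lemma Qp0_lin : is_linear Qp0.
Proof.
move=> c u v; apply/ffunP => x; rewrite !ffunE big_distrr -big_split.
by apply: eq_bigr => b _; rewrite !ffunE /=; ring.
Qed.

Lemma Qm0_lin : is_linear Qm0.
Proof.
move=> c u v; apply/ffunP => x; rewrite !ffunE big_distrr -big_split.
by apply: eq_bigr => b _; rewrite !ffunE /=; ring.
Qed.

Lemma Qpi_lin : is_linear Qpi.
Proof.
move=> c u v; apply/ffunP => x; rewrite !ffunE big_distrr -big_split.
by apply: eq_bigr => b _; rewrite !ffunE /=; ring.
Qed.

Lemma Qmi_lin : is_linear Qmi.
Proof.
move=> c u v; apply/ffunP => x; rewrite !ffunE big_distrr -big_split.
by apply: eq_bigr => b _; rewrite !ffunE /=; ring.
Qed.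

Lemma Pm_int a b : Pm a b \is a Num.int.
Proof.
apply: rpred_sum => T _; apply: rpredM; first by apply: rpredX; exact: rpredN1.
exact: rpred_nat.
Qed.

Lemma Nm_int a b : Nm a b \is a Num.int.
Proof.
apply: rpred_sum => T _; apply: rpredM; first by apply: rpredX; exact: rpredN1.
exact: rpred_nat.
Qed.

End Alg.

Local Open Scope ring_scope.

Theorem mainTheorem5 (n : nat) (e : int) :
  (* Q_+ and Q_- exist *)
  (exists (Qp Qm : vec n e -> vec n e), is_linear Qp /\ is_linear Qm /\
     (forall u v : vec n e, dotf u v = bilf u (Qp v) /\ dotf u v = bilf (Qm u) v))
  /\
  (* and any Q_+, Q_- with the defining property satisfy the formulas *)
  (forall (Qp Qm : vec n e -> vec n e),
     is_linear Qp -> is_linear Qm ->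
     (forall u v : vec n e, dotf u v = bilf u (Qp v)) ->
     (forall u v : vec n e, dotf u v = bilf (Qm u) v) ->
     (forall w : Mne n e,
        Qp (bvec (val w)) =
          \sum_(T : {set 'I_n} | T \subset Ey (val w))
             scv ((-1) ^+ #|T|) (bvec (psiy T (val w)) : vec n e)) /\
     (forall w : Mne n e,
        Qm (bvec (val w)) =
          \sum_(T : {set 'I_n} | T \subset Ex (val w))
             scv ((-1) ^+ #|T|) (bvec (psix T (val w)) : vec n e)) /\
     (exists Qpi : vec n e -> vec n e,
        is_linear Qpi /\ cancel Qp Qpi /\ cancel Qpi Qp /\
        forall w : Mne n e,
          Qpi (bvec (val w)) =
            \sum_(w' : Mne n e | leW (val w') (val w)) bvec (val w')) /\
     (exists Qmi : vec n e -> vec n e,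
        is_linear Qmi /\ cancel Qm Qmi /\ cancel Qmi Qm /\
        forall w : Mne n e,
          Qmi (bvec (val w)) =
            \sum_(w' : Mne n e | leW (val w) (val w')) bvec (val w')) /\
     (* in particular: integer coefficients *)
     (forall w w' : Mne n e,
        Qp (bvec (val w)) w' \is a Num.int /\
        Qm (bvec (val w)) w' \is a Num.int)).
Proof.
split.
  exists (@Qp0 n e), (@Qm0 n e); split; first exact: Qp0_lin.
  split; first exact: Qm0_lin.
  by move=> u v; split; [exact: Qp0_prop | exact: Qm0_prop].
move=> Qp Qm _ _ Hp Hm.
have eP : forall v, Qp v = Qp0 v.
  by move=> v; apply/ffunP => a; rewrite (uniqP Hp) (uniqP (@Qp0_prop n e)).
have eM : forall u, Qm u = Qm0 u.
  by move=> u; apply/ffunP => a; rewrite (uniqM Hm) (uniqM (@Qm0_prop n e)).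
have fP : forall (w a : Mne n e), Qp (bvec (val w)) a = Pm a w.
  by move=> w a; rewrite eP ffunE sum_bvecR.
have fM : forall (w a : Mne n e), Qm (bvec (val w)) a = Nm a w.
  by move=> w a; rewrite eM ffunE sum_bvecR.
split.
  move=> w; apply/ffunP => a; rewrite fP sum_ffunE /Pm.
  by apply: eq_bigr => T _; rewrite !ffunE.
split.
  move=> w; apply/ffunP => a; rewrite fM sum_ffunE /Nm.
  by apply: eq_bigr => T _; rewrite !ffunE.
split.
  exists (@Qpi n e); split; first exact: Qpi_lin.
  split.
    move=> v; apply/ffunP => a; rewrite ffunE.
    by rewrite -[RHS]dot_bvec Hp bil_bvec; apply: eq_bigr => b _; rewrite mulrC.
  split.
    move=> v; apply/ffunP => a; rewrite (uniqP Hp).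
    under eq_bigr do rewrite ffunE big_distrr.
    rewrite exchange_big /=.
    rewrite (eq_bigr (fun b => v b * ((a == b) : nat)%:R)); last first.
      by move=> b _; rewrite -NL big_distrr; apply: eq_bigr => c _; rewrite /=; ring.
    rewrite (bigD1 a) //= eqxx mulr1 big1 ?addr0 // => b hb.
    by rewrite eq_sym (negbTE hb) mulr0.
  by move=> w; apply/ffunP => a; rewrite ffunE sum_bvecR sum_sel.
split.
  exists (@Qmi n e); split; first exact: Qmi_lin.
  split.
    move=> u; apply/ffunP => b; rewrite ffunE.
    by rewrite -[RHS]dot_bvec' Hm bil_bvec'.
  split.
    move=> u; apply/ffunP => b; rewrite (uniqM Hm).
    under eq_bigr do rewrite ffunE big_distrl.
    rewrite exchange_big /=.
    rewrite (eq_bigr (fun a => u a * ((a == b) : nat)%:R)); last first.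
      by move=> a _; rewrite -LP big_distrr; apply: eq_bigr => c _; rewrite /=; ring.
    apply: esym; rewrite (bigD1 b) //= eqxx mulr1 big1 ?addr0 // => a ha.
    by rewrite (negbTE ha) mulr0.
  by move=> w; apply/ffunP => b; rewrite ffunE sum_bvecL sum_sel.
move=> w w'; rewrite fP fM; split; [exact: Pm_int | exact: Nm_int].
Qed.
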